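(* Let $k$ be a field, $n\geq1$, $R=k[x_1,\dots,x_n,y_1,\dots,y_n]/(\sum_i x_iy_i-1)$, $x=(x_1,\dots,x_n)$, $y=(y_1,\dots,y_n)$. Then in $\widetilde{K}_1(Q_{2n-1})$ one has $[\alpha_n(x,y)^t]=(-1)^{n+1}[\alpha_n(x,y)]$.
   Context: $Q_{2n-1}=\operatorname{Spec}R$. The Suslin matrix $\alpha_n(a,b)\in M_{2^{n-1}}(R)$ for $a=(a_1,\dots,a_n),b=(b_1,\dots,b_n)\in R^n$ is defined by $\alpha_1(a,b)=a_1$ and for $n\ge2$, $\alpha_n(a,b)=\begin{pmatrix}a_1\mathrm{Id}_{2^{n-2}}&\alpha_{n-1}(a',b')\\-\alpha_{n-1}(b',a')^t&b_1\mathrm{Id}_{2^{n-2}}\end{pmatrix}$ with $a'=(a_2,\dots,a_n)$, $b'=(b_2,\dots,b_n)$; when $a\cdot b^t=1$ it is invertible. $\widetilde{K}_1(Q_{2n-1})$ is the cokernel of $K_1(k)\to K_1(R)$ induced by the structure map, and $[M]$ is the class of $M\in GL_{2^{n-1}}(R)$. *)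

(* Defs.v *)
From HB Require Import structures.
From mathcomp Require Import all_boot all_order all_algebra.
From mathcomp Require Import generic_quotient ring_quotient.
From mathcomp Require Import mpoly.
From Stdlib Require Import ClassicalEpsilon.

Set Implicit Arguments.
Unset Strict Implicit.
Unset Printing Implicit Defensive.

Import GRing.Theory.
Local Open Scope ring_scope.
Local Open Scope quotient_scope.

(* The Suslin matrix alpha_{m+1}(a,b) in M_{2^m}(R), where the vectors     *)
(* a = (a_1,...,a_{m+1}), b = (b_1,...,b_{m+1}) are given as functions     *)
(* nat -> R with a_1 = a 0, a_2 = a 1, ... (only indices 0..m are used).   *)

Lemma pow2S (m : nat) : (2 ^ m + 2 ^ m = 2 ^ m.+1)%N.
Proof. by rewrite addnn -mul2n expnS. Qed.

Fixpoint suslin (R : pzRingType) (m : nat) (a b : nat -> R) : 'M[R]_(2 ^ m) :=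
  match m return 'M[R]_(2 ^ m) with
  | 0 => (a 0%N)%:M
  | m'.+1 =>
      castmx (pow2S m', pow2S m')
        (block_mx ((a 0%N)%:M) (suslin m' (fun i => a i.+1) (fun i => b i.+1))
                  (- (suslin m' (fun i => b i.+1) (fun i => a i.+1))^T)
                  ((b 0%N)%:M))
  end.

Inductive elem_mx (R : pzRingType) (N : nat) : 'M[R]_N -> Prop :=
| elem_mx1 : elem_mx 1%:M
| elem_mxM (E : 'M[R]_N) (i j : 'I_N) (r : R) :
    i != j -> elem_mx E -> elem_mx (E *m (1%:M + r *: delta_mx i j)).

Definition invertible_mx (R : pzRingType) (m : nat) (A : 'M[R]_m) : Prop :=
  exists B : 'M[R]_m, A *m B = 1%:M /\ B *m A = 1%:M.

(* [A] = [B] in  K~_1 = coker(K_1(k) -> K_1(R)) = GL(R)/(E(R).GL(k)),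
   where iota : k -> R is the structure map: after stabilisation,
   A (+) 1 = (B (+) 1) * E * iota(C) with E elementary and C in GL(k). *)
Definition rK1_eq (k : fieldType) (R : pzRingType) (iota : k -> R) (m : nat)
    (A B : 'M[R]_m) : Prop :=
  invertible_mx A /\ invertible_mx B /\
  exists (p : nat) (E : 'M[R]_(m + p)) (C : 'M[k]_(m + p)),
    elem_mx E /\ C \in unitmx /\
    block_mx A 0 0 (1%:M : 'M[R]_p) =
      block_mx B 0 0 (1%:M : 'M[R]_p) *m E *m map_mx iota C.

Definition Xv (k : fieldType) (N : nat) (i : 'I_N) : {mpoly k[N + N]} :=
  'X_(lshift N i).
Definition Yv (k : fieldType) (N : nat) (i : 'I_N) : {mpoly k[N + N]} :=
  'X_(rshift N i).

Definition qrel (k : fieldType) (N : nat) : {mpoly k[N + N]} :=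
  \sum_(i < N) @Xv k N i * @Yv k N i - 1.

Definition qideal (k : fieldType) (n : nat) : pred {mpoly k[n.+1 + n.+1]} :=
  fun p => if excluded_middle_informative (exists q, p = q * @qrel k n.+1)
           then true else false.

Lemma qidealP (k : fieldType) (n : nat) p :
  reflect (exists q, p = q * @qrel k n.+1) (p \in @qideal k n).
Proof.
rewrite /in_mem /= /qideal.
by case: excluded_middle_informative => H; constructor.
Qed.

Lemma qideal_closed (k : fieldType) (n : nat) : idealr_closed (@qideal k n).
Proof.
split.
- by apply/qidealP; exists 0; rewrite mul0r.
- apply/qidealP => -[q Hq].
  pose v := fun j : 'I_(n.+1 + n.+1) => if (val j == 0%N) || (val j == n.+1)
                                        then (1 : k) else 0.
  have := congr1 (meval v) Hq.
  rewrite meval1 mevalM /qrel mevalB meval1 (bigD1 ord0) //= mevalD mevalM.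
  rewrite /Xv /Yv !mevalXU /v /= addn0 eqxx mul1r.
  rewrite (big_morph (meval v) (@mevalD _ _ v) (meval0 v)) big1 ?addr0 ?subrr.
    by rewrite mulr0 => /eqP; rewrite oner_eq0.
  move=> i Hi; rewrite mevalM !mevalXU /v /=.
  have H0 : (i == 0%N :> nat) = false.
    by apply/negbTE; move: Hi; apply: contra => /eqP Hi; apply/eqP/val_inj.
  have H1 : (n.+1 + i == n.+1)%N = false.
    by rewrite -[X in (_ == X)%N]addn0 eqn_add2l H0.
  by rewrite H1 mulr0.
- move=> a u w /qidealP [q1 ->] /qidealP [q2 ->].
  by apply/qidealP; exists (a * q1 + q2); rewrite mulrDl mulrA.
Qed.

Definition qidealI (k : fieldType) (n : nat) : idealr {mpoly k[n.+1 + n.+1]} :=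
  HB.pack (@qideal k n)
    (GRing.isZmodClosed.Build _ (@qideal k n)
       (idealr_closedB (@qideal_closed k n)))
    (isProperIdeal.Build _ (@qideal k n)
       (idealr_closed_nontrivial (@qideal_closed k n))).

Definition Rq (k : fieldType) (n : nat) := {ideal_quot (qidealI k n)}.

Definition Rq_pi (k : fieldType) (n : nat) (p : {mpoly k[n.+1 + n.+1]}) :
  Rq k n := \pi_(Rq k n) p.

Definition Rq_iota (k : fieldType) (n : nat) (c : k) : Rq k n := @Rq_pi k n c%:MP.

Definition xq (k : fieldType) (n : nat) (i : nat) : Rq k n :=
  @Rq_pi k n (@Xv k n.+1 (inord i : 'I_n.+1)).
Definition yq (k : fieldType) (n : nat) (i : nat) : Rq k n :=
  @Rq_pi k n (@Yv k n.+1 (inord i : 'I_n.+1)).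

(* Main.v *)
Require Import Defs.
From HB Require Import structures.
From mathcomp Require Import all_boot all_order all_algebra.
From mathcomp Require Import generic_quotient ring_quotient mpoly.
Set Implicit Arguments.
Unset Strict Implicit.
Unset Printing Implicit Defensive.
Import GRing.Theory.
Local Open Scope ring_scope.

Section Cast.
Variable R : comNzRingType.
Lemma cast_mul m m' (e : m = m') (A B : 'M[R]_m) :
  castmx (e, e) (A *m B) = castmx (e, e) A *m castmx (e, e) B.
Proof. by case: m' / e; rewrite !castmx_id. Qed.
Lemma cast_tr m m' (e : m = m') (A : 'M[R]_m) :
  (castmx (e, e) A)^T = castmx (e, e) A^T.
Proof. by case: m' / e; rewrite !castmx_id. Qed.
Lemma cast_scalar m m' (e : m = m') (a : R) :
  castmx (e, e) (a%:M : 'M[R]_m) = a%:M.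
Proof. by case: m' / e; rewrite !castmx_id. Qed.
Lemma trN m n (A : 'M[R]_(m, n)) : (- A)^T = - A^T.
Proof. by apply/matrixP=> i j; rewrite !mxE. Qed.
End Cast.

Lemma suslinS (R : pzRingType) m (a b : nat -> R) : suslin m.+1 a b =
      castmx (pow2S m, pow2S m)
        (block_mx ((a 0%N)%:M) (suslin m (fun i => a i.+1) (fun i => b i.+1))
                  (- (suslin m (fun i => b i.+1) (fun i => a i.+1))^T)
                  ((b 0%N)%:M)).
Proof. by []. Qed.

Lemma suslin_inv (R : comNzRingType) m (a b : nat -> R) :
  suslin m a b *m (suslin m b a)^T = (\sum_(i < m.+1) a i * b i)%:M /\
  (suslin m b a)^T *m suslin m a b = (\sum_(i < m.+1) a i * b i)%:M.
Proof.
elim: m a b => [|m IH] a b.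
  by rewrite /= tr_scalar_mx big_ord1 -!scalar_mxM mulrC.
have [h1 h2] := IH (fun i => a i.+1) (fun i => b i.+1).
rewrite !suslinS !cast_tr -!cast_mul tr_block_mx !mulmx_block.
rewrite big_ord_recl -(cast_scalar (pow2S m)) scalar_mx_block.
rewrite !tr_scalar_mx !trN !trmxK.
rewrite !mul_scalar_mx !mul_mx_scalar !mulNmx !mulmxN h1 h2 !opprK.
rewrite !scalerN !addNr !addrN !scale_scalar_mx -!raddfD /=.
have -> : \sum_(i < m.+1) a (bump 0 i) * b (bump 0 i) = \sum_(i < m.+1) a i.+1 * b i.+1.
  by apply: eq_bigr => i _; rewrite /bump leq0n add1n.
by rewrite (mulrC (b 0%N)) (addrC (\sum_(i < m.+1) a i.+1 * b i.+1)).
Qed.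

Lemma orth_diag (R : comNzRingType) m m' (e : m + m = m') (A B : 'M[R]_m) :
  A *m A^T = 1%:M -> A^T *m A = 1%:M -> B *m B^T = 1%:M -> B^T *m B = 1%:M ->
  (castmx (e, e) (block_mx A 0 0 B)) *m (castmx (e, e) (block_mx A 0 0 B))^T = 1%:M /\
  (castmx (e, e) (block_mx A 0 0 B))^T *m (castmx (e, e) (block_mx A 0 0 B)) = 1%:M.
Proof.
move=> h1 h2 h3 h4; case: m' / e; rewrite castmx_id tr_block_mx !mulmx_block.
by rewrite !trmx0 !mulmx0 !mul0mx !addr0 !add0r h1 h2 h3 h4 -scalar_mx_block.
Qed.

Lemma orth_anti (R : comNzRingType) m m' (e : m + m = m') (A B : 'M[R]_m) :
  A *m A^T = 1%:M -> A^T *m A = 1%:M -> B *m B^T = 1%:M -> B^T *m B = 1%:M ->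
  (castmx (e, e) (block_mx 0 A B 0)) *m (castmx (e, e) (block_mx 0 A B 0))^T = 1%:M /\
  (castmx (e, e) (block_mx 0 A B 0))^T *m (castmx (e, e) (block_mx 0 A B 0)) = 1%:M.
Proof.
move=> h1 h2 h3 h4; case: m' / e; rewrite castmx_id tr_block_mx !mulmx_block.
by rewrite !trmx0 !mulmx0 !mul0mx !addr0 !add0r h1 h2 h3 h4 -scalar_mx_block.
Qed.

Lemma suslin_rel (k R : comNzRingType) (f : {rmorphism k -> R}) n :
  exists L Rr : 'M[k]_(2 ^ n),
   [/\ L *m L^T = 1%:M, L^T *m L = 1%:M, Rr *m Rr^T = 1%:M, Rr^T *m Rr = 1%:M &
   forall a b : nat -> R,
    (if ~~ odd n then (suslin n a b)^T else suslin n b a) =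
      map_mx f L *m suslin n a b *m map_mx f Rr].
Proof.
elim: n => [|n [L [Rr [hL1 hL2 hR1 hR2 hrel]]]].
  exists 1%:M, 1%:M; rewrite tr_scalar_mx !mulmx1; split => // a b.
  by rewrite /= tr_scalar_mx map_mx1 mul1mx mulmx1.
have hLf1 : map_mx f L *m (map_mx f L)^T = 1%:M by rewrite map_trmx -map_mxM hL1 map_mx1.
have hLf2 : (map_mx f L)^T *m map_mx f L = 1%:M by rewrite map_trmx -map_mxM hL2 map_mx1.
have hRf1 : map_mx f Rr *m (map_mx f Rr)^T = 1%:M by rewrite map_trmx -map_mxM hR1 map_mx1.
have hRf2 : (map_mx f Rr)^T *m map_mx f Rr = 1%:M by rewrite map_trmx -map_mxM hR2 map_mx1.
move: hrel; set Lf := map_mx f L; set Rf := map_mx f Rr => hrel.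
case hn: (odd n) hrel => /= hrel.
-
  exists (castmx (pow2S n, pow2S n) (block_mx L 0 0 (- Rr^T))),
         (castmx (pow2S n, pow2S n) (block_mx L^T 0 0 (- Rr))).
  have hRn1 : (- Rr^T) *m (- Rr^T)^T = 1%:M by rewrite trN trmxK mulNmx mulmxN opprK hR2.
  have hRn2 : (- Rr^T)^T *m (- Rr^T) = 1%:M by rewrite trN trmxK mulNmx mulmxN opprK hR1.
  have hRn3 : (- Rr) *m (- Rr)^T = 1%:M by rewrite trN mulNmx mulmxN opprK hR1.
  have hRn4 : (- Rr)^T *m (- Rr) = 1%:M by rewrite trN mulNmx mulmxN opprK hR2.
  have hLt1 : L^T *m L^T^T = 1%:M by rewrite trmxK hL2.
  have hLt2 : L^T^T *m L^T = 1%:M by rewrite trmxK hL1.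
  have [o1 o2] := orth_diag (pow2S n) hL1 hL2 hRn1 hRn2.
  have [o3 o4] := orth_diag (pow2S n) hLt1 hLt2 hRn3 hRn4.
  split => //.
  + move=> a b; rewrite hn /= !map_castmx cast_tr -!cast_mul; congr castmx.
    rewrite !map_block_mx !mulmx_block tr_block_mx.
    rewrite !map_mx0 !map_mxN -!map_trmx -/Lf -/Rf !mulmx0 !mul0mx !addr0 !add0r !tr_scalar_mx !trN !trmxK.
    rewrite ?mul_mx_scalar ?mul_scalar_mx.
    congr block_mx.
    * by rewrite -scalemxAl hLf1 scale_scalar_mx mulr1.
    * by rewrite mulmxN hrel.
    * by rewrite hrel !trmx_mul mulNmx mulmxN opprK mulmxA.
    * by rewrite scalerN mulNmx mulmxN opprK -scalemxAl hRf2 scale_scalar_mx mulr1.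
- exists (castmx (pow2S n, pow2S n) (block_mx 0 (- Rr^T) L 0)),
         (castmx (pow2S n, pow2S n) (block_mx 0 L^T (- Rr) 0)).
  have hRn1 : (- Rr^T) *m (- Rr^T)^T = 1%:M by rewrite trN trmxK mulNmx mulmxN opprK hR2.
  have hRn2 : (- Rr^T)^T *m (- Rr^T) = 1%:M by rewrite trN trmxK mulNmx mulmxN opprK hR1.
  have hRn3 : (- Rr) *m (- Rr)^T = 1%:M by rewrite trN mulNmx mulmxN opprK hR1.
  have hRn4 : (- Rr)^T *m (- Rr) = 1%:M by rewrite trN mulNmx mulmxN opprK hR2.
  have hLt1 : L^T *m L^T^T = 1%:M by rewrite trmxK hL2.
  have hLt2 : L^T^T *m L^T = 1%:M by rewrite trmxK hL1.
  have [o1 o2] := orth_anti (pow2S n) hRn1 hRn2 hL1 hL2.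
  have [o3 o4] := orth_anti (pow2S n) hLt1 hLt2 hRn3 hRn4.
  split => //.
  move=> a b; rewrite hn /= !map_castmx -!cast_mul; congr castmx.
  rewrite !map_block_mx !mulmx_block.
  rewrite !map_mx0 !map_mxN -!map_trmx -/Lf -/Rf !mulmx0 !mul0mx !addr0 !add0r.
  rewrite ?mul_mx_scalar ?mul_scalar_mx.
  congr block_mx.
  + by rewrite scalerN mulNmx mulmxN opprK -scalemxAl hRf2 scale_scalar_mx mulr1.
  + have hB := hrel (fun i => b i.+1) (fun i => a i.+1).
    by apply: trmx_inj; rewrite !trmx_mul !trN !trmxK hB !mulNmx !mulmxN opprK mulmxA.
  + by rewrite mulmxN hrel.
  + by rewrite -scalemxAl hLf1 scale_scalar_mx mulr1.
Qed.
Section Elem.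
Variable R : comNzRingType.

Lemma elem_mx_mul N (A B : 'M[R]_N) : elem_mx A -> elem_mx B -> elem_mx (A *m B).
Proof.
move=> hA; elim=> [|E i j r hij hE IH]; first by rewrite mulmx1.
by rewrite mulmxA; apply: elem_mxM.
Qed.

Lemma elem_trans N (i j : 'I_N) (r : R) : i != j -> elem_mx (1%:M + r *: delta_mx i j : 'M[R]_N).
Proof. by move=> hij; rewrite -[X in elem_mx X]mul1mx; apply: elem_mxM => //; apply: elem_mx1. Qed.

Lemma up_delta m1 m2 (i : 'I_m1) (j : 'I_m2) r :
  block_mx 1%:M (r *: delta_mx i j) 0 1%:M =
  1%:M + r *: delta_mx (lshift m2 i) (rshift m1 j) :> 'M[R]_(m1 + m2).
Proof.
apply/matrixP=> u v.
rewrite -[u](splitK) -[v](splitK).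
case: (split u) => u'; case: (split v) => v' /=;
rewrite ?(block_mxEul, block_mxEur, block_mxEdl, block_mxEdr) !mxE /=;
rewrite ?eq_lrshift ?eq_rlshift ?eq_lshift ?eq_rshift ?andbF ?andFb ?mulr0 ?addr0 ?add0r //.
Qed.


Lemma lo_delta m1 m2 (i : 'I_m2) (j : 'I_m1) (r : R) :
  block_mx 1%:M 0 (r *: delta_mx i j) 1%:M =
  1%:M + r *: delta_mx (rshift m1 i) (lshift m2 j) :> 'M[R]_(m1 + m2).
Proof.
apply/matrixP=> u v.
rewrite -[u](splitK) -[v](splitK).
case: (split u) => u'; case: (split v) => v' /=;
rewrite ?(block_mxEul, block_mxEur, block_mxEdl, block_mxEdr) !mxE /=;
rewrite ?eq_lrshift ?eq_rlshift ?eq_lshift ?eq_rshift ?andbF ?andFb ?mulr0 ?addr0 ?add0r //.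
Qed.

Lemma elem_up m1 m2 (M : 'M[R]_(m1, m2)) : elem_mx (block_mx 1%:M M 0 1%:M).
Proof.
rewrite [M]matrix_sum_delta.
elim/big_ind: _ => [|M1 M2 h1 h2|i _].
- by rewrite -scalar_mx_block; apply: elem_mx1.
- have -> : block_mx 1%:M (M1 + M2) 0 1%:M = block_mx 1%:M M1 0 1%:M *m block_mx 1%:M M2 0 1%:M :> 'M[R]_(m1 + m2).
    by rewrite mulmx_block !mulmx0 !mul0mx !mulmx1 !mul1mx !addr0 !add0r addrC.
  exact: elem_mx_mul.
- elim/big_ind: _ => [|M1 M2 h1 h2|j _].
  + by rewrite -scalar_mx_block; apply: elem_mx1.
  + have -> : block_mx 1%:M (M1 + M2) 0 1%:M = block_mx 1%:M M1 0 1%:M *m block_mx 1%:M M2 0 1%:M :> 'M[R]_(m1 + m2).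
      by rewrite mulmx_block !mulmx0 !mul0mx !mulmx1 !mul1mx !addr0 !add0r addrC.
    exact: elem_mx_mul.
  + rewrite up_delta; apply: elem_trans.
    by apply/eqP=> /(congr1 val) /=; move: (ltn_ord i) => /[swap] ->; rewrite ltnNge leq_addr.
Qed.

Lemma elem_lo m1 m2 (M : 'M[R]_(m2, m1)) : elem_mx (block_mx 1%:M 0 M 1%:M).
Proof.
rewrite [M]matrix_sum_delta.
elim/big_ind: _ => [|M1 M2 h1 h2|i _].
- by rewrite -scalar_mx_block; apply: elem_mx1.
- have -> : block_mx 1%:M 0 (M1 + M2) 1%:M = block_mx 1%:M 0 M1 1%:M *m block_mx 1%:M 0 M2 1%:M :> 'M[R]_(m1 + m2).
    by rewrite mulmx_block !mulmx0 !mul0mx !mulmx1 !mul1mx !addr0 !add0r.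
  exact: elem_mx_mul.
- elim/big_ind: _ => [|M1 M2 h1 h2|j _].
  + by rewrite -scalar_mx_block; apply: elem_mx1.
  + have -> : block_mx 1%:M 0 (M1 + M2) 1%:M = block_mx 1%:M 0 M1 1%:M *m block_mx 1%:M 0 M2 1%:M :> 'M[R]_(m1 + m2).
      by rewrite mulmx_block !mulmx0 !mul0mx !mulmx1 !mul1mx !addr0 !add0r.
    exact: elem_mx_mul.
  + rewrite lo_delta; apply: elem_trans.
    by apply/eqP=> /(congr1 val) /=; move: (ltn_ord j) => /[swap] <-; rewrite ltnNge leq_addr.
Qed.

Lemma elem_antidiag m (U U' : 'M[R]_m) : U *m U' = 1%:M -> U' *m U = 1%:M ->
  elem_mx (block_mx 0 U (- U') 0 : 'M[R]_(m + m)).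
Proof.
move=> hU hU'.
have -> : block_mx 0 U (- U') 0 =
  block_mx 1%:M U 0 1%:M *m block_mx 1%:M 0 (- U') 1%:M *m block_mx 1%:M U 0 1%:M
   :> 'M[R]_(m + m).
  rewrite !mulmx_block !mulmx0 !mul0mx !mulmx1 !mul1mx !addr0 !add0r.
  rewrite mulmxN hU subrr mul0mx add0r.
  by rewrite mulNmx hU' addNr.
apply: elem_mx_mul; [apply: elem_mx_mul|]; [exact: elem_up|exact: elem_lo|exact: elem_up].
Qed.

Lemma elem_diag m (U U' : 'M[R]_m) : U *m U' = 1%:M -> U' *m U = 1%:M ->
  elem_mx (block_mx U 0 0 U' : 'M[R]_(m + m)).
Proof.
move=> hU hU'.
have -> : block_mx U 0 0 U' = block_mx 0 U (- U') 0 *m block_mx 0 (- 1%:M) (- - 1%:M) 0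
   :> 'M[R]_(m + m).
  rewrite mulmx_block !mulmx0 !mul0mx !addr0 !add0r opprK mulmx1 mulNmx mulmxN mulmx1 opprK.
  done.
apply: elem_mx_mul; apply: elem_antidiag => //; by rewrite mulmxN mulNmx opprK mulmx1.
Qed.

Lemma elem_whitehead m (U U' V V' : 'M[R]_m) :
  U *m U' = 1%:M -> U' *m U = 1%:M -> V *m V' = 1%:M -> V' *m V = 1%:M ->
  elem_mx (block_mx (U *m V *m U' *m V') 0 0 1%:M : 'M[R]_(m + m)).
Proof.
move=> hU hU' hV hV'.
have -> : block_mx (U *m V *m U' *m V') 0 0 1%:M =
  block_mx U 0 0 U' *m block_mx V 0 0 V' *m block_mx (U' *m V') 0 0 (V *m U)
   :> 'M[R]_(m + m).
  rewrite !mulmx_block !mulmx0 !mul0mx !addr0 !add0r !mulmxA.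
  by rewrite !mul0mx -(mulmxA U') hV' mulmx1 hU'.
apply: elem_mx_mul; first apply: elem_mx_mul.
- exact: elem_diag.
- exact: elem_diag.
- apply: elem_diag.
  + by rewrite mulmxA -(mulmxA U') hV' mulmx1 hU'.
  + by rewrite mulmxA -(mulmxA V) hU mulmx1 hV.
Qed.

End Elem.
Section RqFacts.
Variables (k : fieldType) (n : nat).

Lemma Rq_iota_zmod : zmod_morphism (@Rq_iota k n).
Proof. by move=> x y; rewrite /Rq_iota /Rq_pi mpolyCB rmorphB. Qed.
Lemma Rq_iota_monoid : monoid_morphism (@Rq_iota k n).
Proof.
split; rewrite /Rq_iota /Rq_pi; first by rewrite mpolyC1 rmorph1.
by move=> x y; rewrite mpolyCM rmorphM.
Qed.
HB.instance Definition _ := GRing.isZmodMorphism.Build k (Rq k n) (@Rq_iota k n) Rq_iota_zmod.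
HB.instance Definition _ := GRing.isMonoidMorphism.Build k (Rq k n) (@Rq_iota k n) Rq_iota_monoid.

Lemma Rq_sum : \sum_(i < n.+1) xq k n i * yq k n i = 1.
Proof.
have -> : \sum_(i < n.+1) xq k n i * yq k n i = Rq_pi (\sum_(i < n.+1) @Xv k n.+1 i * @Yv k n.+1 i).
  rewrite /Rq_pi rmorph_sum /=; apply: eq_bigr => i _.
  by rewrite rmorphM /xq /yq /Rq_pi inord_val.
have : qrel k n.+1 - 0 \in qidealI k n.
  by apply/qidealP; exists 1; rewrite mul1r subr0.
rewrite Quotient.idealrBE => /eqP.
rewrite /Rq_pi /qrel rmorphB rmorph1 rmorph0 => /eqP; rewrite subr_eq0 => /eqP h.
exact: h.
Qed.
End RqFacts.

Lemma mulmxKt (R : comNzRingType) m p (X : 'M[R]_(p, m)) (A B : 'M[R]_m) :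
  A *m B = 1%:M -> X *m A *m B = X.
Proof. by move=> h; rewrite -mulmxA h mulmx1. Qed.

Lemma finish (k : fieldType) (R : comNzRingType) (f : {rmorphism k -> R}) m
  (A B E0 : 'M[R]_m) (K K' : 'M[k]_m) :
  invertible_mx A -> invertible_mx B ->
  elem_mx (block_mx E0 0 0 1%:M : 'M[R]_(m + m)) -> K *m K' = 1%:M ->
  A = B *m E0 *m map_mx f K -> rK1_eq f A B.
Proof.
move=> hA hB hE hK eA; split => //; split => //.
exists m, (block_mx E0 0 0 1%:M), (block_mx K 0 0 1%:M); split => //; split.
- by rewrite unitmxE det_ublock det1 mulr1 -unitmxE; case: (mulmx1_unit hK).
- by rewrite map_block_mx map_mx0 map_mx1 !mulmx_block !(mulmx0, mul0mx, mul1mx, mulmx1, addr0, add0r) eA.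
Qed.

Theorem lemma3p11 (k : fieldType) (n : nat) :
  let alpha := suslin n (@xq k n) (@yq k n) in
  if ~~ odd n then rK1_eq (@Rq_iota k n) alpha^T alpha
  else rK1_eq (@Rq_iota k n) (alpha^T *m alpha) 1%:M.
Proof.
move=> alpha.
have [i1 i2] := suslin_inv n (xq k n) (yq k n).
rewrite Rq_sum -/alpha in i1 i2.
set a' := (suslin n (yq k n) (xq k n))^T in i1 i2.
have [L [Rr [hL1 hL2 hR1 hR2 hrel]]] := @suslin_rel k (Rq k n) (@Rq_iota k n) n.
have h := hrel (xq k n) (yq k n); rewrite -/alpha in h.
set Lf := map_mx (@Rq_iota k n) L in h *.
set Rf := map_mx (@Rq_iota k n) Rr in h *.
have hLf1 : Lf *m Lf^T = 1%:M by rewrite map_trmx -map_mxM hL1 map_mx1.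
have hLf2 : Lf^T *m Lf = 1%:M by rewrite map_trmx -map_mxM hL2 map_mx1.
have hRf1 : Rf *m Rf^T = 1%:M by rewrite map_trmx -map_mxM hR1 map_mx1.
have hRf2 : Rf^T *m Rf = 1%:M by rewrite map_trmx -map_mxM hR2 map_mx1.
have invA : invertible_mx alpha by exists a'.
case: ifP h => _ h.
- apply: (@finish _ _ _ _ _ _ (a' *m Lf *m alpha *m Lf^T) (L *m Rr) (Rr^T *m L^T)).
  + exists a'^T; split; by rewrite -trmx_mul ?i1 ?i2 tr_scalar_mx.
  + exact: invA.
  + exact: elem_whitehead.
  + by rewrite mulmxA (mulmxKt _ hR1) hL1.
  + rewrite h map_mxM -/Lf -/Rf !mulmxA.
    by rewrite i1 mul1mx (mulmxKt _ hLf2).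
- have e1 : Lf *m alpha *m Rf *m alpha^T = 1%:M.
    by rewrite -h -[suslin _ _ _](trmxK) -/a' -trmx_mul i1 tr_scalar_mx.
  have hT : alpha^T = Rf^T *m a' *m Lf^T.
    transitivity (Rf^T *m a' *m Lf^T *m (Lf *m alpha *m Rf *m alpha^T)); last by rewrite e1 mulmx1.
    rewrite !mulmxA (mulmxKt _ hLf2) -(mulmxA Rf^T a' alpha) i2 mulmx1 hRf2 mul1mx.
    done.
  apply: (@finish _ _ _ _ _ _
     ((Rf^T *m a' *m Rf) *m (Rf^T *m Lf^T *m Rf) *m (Rf^T *m alpha *m Rf) *m (Rf^T *m Lf *m Rf))
     (Rr^T *m L^T) (L *m Rr)).
  + exists (a' *m a'^T); split.
    * by rewrite mulmxA -(mulmxA _ alpha a') i1 mulmx1 -trmx_mul i2 tr_scalar_mx.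
    * by rewrite mulmxA -(mulmxA _ a'^T) -trmx_mul i1 tr_scalar_mx mulmx1 i2.
  + by exists 1%:M; rewrite mulmx1.
  + apply: elem_whitehead.
    * by rewrite !mulmxA (mulmxKt _ hRf1) -(mulmxA Rf^T a' alpha) i2 mulmx1 hRf2.
    * by rewrite !mulmxA (mulmxKt _ hRf1) -(mulmxA Rf^T alpha a') i1 mulmx1 hRf2.
    * by rewrite !mulmxA (mulmxKt _ hRf1) -(mulmxA Rf^T Lf^T Lf) hLf2 mulmx1 hRf2.
    * by rewrite !mulmxA (mulmxKt _ hRf1) -(mulmxA Rf^T Lf Lf^T) hLf1 mulmx1 hRf2.
  + by rewrite mulmxA (mulmxKt _ hL2) hR2.
  + rewrite hT map_mxM -!map_trmx -/Lf -/Rf mul1mx !mulmxA.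
    by rewrite !(mulmxKt _ hRf1) (mulmxKt _ hLf1).
Qed.
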